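(* For every TRS $\mathcal{R}$, $\to_\mathcal{R}^*\cdot\to_{\mathsf{CPS}(\mathcal{R})}\cdot\to_\mathcal{R}^* \;=\; \to_\mathcal{R}^*\cdot\to_{\mathsf{PCPS}(\mathcal{R})}\cdot\to_\mathcal{R}^*$; in particular $\mathsf{CPS}(\mathcal{R})/\mathcal{R}$ is terminating if and only if $\mathsf{PCPS}(\mathcal{R})/\mathcal{R}$ is terminating.
   Context: A TRS is a set of rules $\ell\to r$ ($\ell\notin\mathcal{V}$, $\mathcal{V}ar(r)\subseteq\mathcal{V}ar(\ell)$). $\mathcal{P}/\mathcal{R}$ terminating means $\to_\mathcal{R}^*\cdot\to_\mathcal{P}\cdot\to_\mathcal{R}^*$ admits no infinite chain. Critical peak of $\mathcal{R}$: for variants $\ell_1\to r_1,\ell_2\to r_2$ of $\mathcal{R}$-rules without common variables, a function-symbol position $p$ of $\ell_2$, a most general unifier $\sigma$ of $\ell_1$ and $\ell_2|_p$, with $\ell_1\to r_1$ not a variant of $\ell_2\to r_2$ if $p$ is the root: source $s=\ell_2\sigma$, results $t=(\ell_2\sigma)[r_1\sigma]_p$, $u=r_2\sigma$. Parallel critical peak of $\mathcal{R}$: for variants $\ell\to r$ and $\ell_p\to r_p$ ($p\in P$) of $\mathcal{R}$-rules, pairwise variable-disjoint, $P$ a non-empty set of pairwise parallel function-symbol positions of $\ell$, $\sigma$ an mgu of $\{\ell_p\approx\ell|_p\}_{p\in P}$, and $\ell_\epsilon\to r_\epsilon$ not a variant of $\ell\to r$ if $P=\{\epsilon\}$: source $s=\ell\sigma$,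 results $t=(\ell\sigma)[r_p\sigma]_{p\in P}$, $u=r\sigma$. $\mathsf{CPS}(\mathcal{R})=\{s\to t,s\to u\mid (t,s,u)$ a critical peak$\}$ and $\mathsf{PCPS}(\mathcal{R})=\{s\to t,s\to u\mid(t,s,u)$ a parallel critical peak$\}$. *)

(* Defs.v *)
From mathcomp Require Import all_boot.
From Stdlib Require Import Relations.
From Stdlib Require List.

Set Implicit Arguments.
Unset Strict Implicit.
Unset Printing Implicit Defensive.

Section TRS.
Variables (F V : Type).

Inductive term : Type :=
| Var of V
| Fun of F & seq term.

Definition rule := (term * term)%type.

Fixpoint subst (sg : V -> term) (t : term) : term :=
  match t with
  | Var x => sg x
  | Fun f ts => Fun f (map (subst sg) ts)
  end.

Inductive occurs (x : V) : term -> Prop :=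
| occ_var : occurs x (Var x)
| occ_fun f ts t : List.In t ts -> occurs x t -> occurs x (Fun f ts).

Definition occurs_rule (x : V) (rl : rule) : Prop := occurs x rl.1 \/ occurs x rl.2.

(* Positions are sequences of (0-based) argument indices. *)
Definition pos := seq nat.

Fixpoint subterm_at (t : term) (p : pos) : option term :=
  match p with
  | [::] => Some t
  | i :: q =>
      match t with
      | Var _ => None
      | Fun _ ts =>
          match List.nth_error ts i with
          | Some u => subterm_at u q
          | None => None
          end
      end
  end.

Fixpoint upd_nth (A : Type) (g : A -> A) (xs : seq A) (i : nat) : seq A :=
  match xs, i with
  | [::], _ => [::]
  | x :: xs', 0 => g x :: xs'
  | x :: xs', i'.+1 => x :: upd_nth g xs' i'
  end.

(* t[u]_p  (t unchanged if p is not a position of t) *)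
Fixpoint replace_at (t : term) (p : pos) (u : term) : term :=
  match p with
  | [::] => u
  | i :: q =>
      match t with
      | Var x => Var x
      | Fun f ts => Fun f (upd_nth (fun ti => replace_at ti q u) ts i)
      end
  end.

Definition fun_pos (t : term) (p : pos) : Prop :=
  exists f ts, subterm_at t p = Some (Fun f ts).

Definition parallel (p q : pos) : bool := ~~ prefix p q && ~~ prefix q p.

Definition is_trs (R : rule -> Prop) : Prop :=
  forall l r, R (l, r) ->
    (exists f ts, l = Fun f ts) /\ (forall x, occurs x r -> occurs x l).

Definition rstep (R : rule -> Prop) (s t : term) : Prop :=
  exists l r (sg : V -> term) (p : pos),
    R (l, r) /\ subterm_at s p = Some (subst sg l) /\ t = replace_at s p (subst sg r).

Definition rstar (R : rule -> Prop) : relation term := clos_refl_trans term (rstep R).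

Definition rel_mid (R P : rule -> Prop) (s t : term) : Prop :=
  exists s' t', rstar R s s' /\ rstep P s' t' /\ rstar R t' t.

Definition rel_terminating (P R : rule -> Prop) : Prop :=
  ~ exists a : nat -> term, forall i, rel_mid R P (a i) (a i.+1).

Definition variant (rl' rl : rule) : Prop :=
  exists pi : V -> V, bijective pi /\
    rl'.1 = subst (fun x => Var (pi x)) rl.1 /\ rl'.2 = subst (fun x => Var (pi x)) rl.2.

Definition variant_of (R : rule -> Prop) (rl : rule) : Prop :=
  exists rl0, R rl0 /\ variant rl rl0.

Definition var_disjoint (rl1 rl2 : rule) : Prop :=
  forall x, ~ (occurs_rule x rl1 /\ occurs_rule x rl2).

Definition unifies (sg : V -> term) (E : term * term -> Prop) : Prop :=
  forall e, E e -> subst sg e.1 = subst sg e.2.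

Definition mgu (sg : V -> term) (E : term * term -> Prop) : Prop :=
  unifies sg E /\
  forall tau, unifies tau E -> exists d : V -> term, forall x, tau x = subst d (sg x).

Definition crit_peak (R : rule -> Prop) (t s u : term) : Prop :=
  exists (l1 r1 l2 r2 : term) (p : pos) (sg : V -> term),
    variant_of R (l1, r1) /\ variant_of R (l2, r2) /\ var_disjoint (l1, r1) (l2, r2) /\
    fun_pos l2 p /\
    mgu sg (fun e => e.1 = l1 /\ subterm_at l2 p = Some e.2) /\
    (p = [::] -> ~ variant (l1, r1) (l2, r2)) /\
    s = subst sg l2 /\ t = replace_at (subst sg l2) p (subst sg r1) /\ u = subst sg r2.

(* (l sg)[r_p sg]_{p in P}; the order is irrelevant as positions are parallel *)
Definition par_replace (t : term) (P : seq pos) (g : pos -> term) : term :=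
  foldr (fun p acc => replace_at acc p (g p)) t P.

(* (t, s, u) is a parallel critical peak of R; P is a finite set given as a
   duplicate-free list, and the rules l_p -> r_p are given by lp, rp. *)
Definition par_crit_peak (R : rule -> Prop) (t s u : term) : Prop :=
  exists (l r : term) (lp rp : pos -> term) (P : seq pos) (sg : V -> term),
    variant_of R (l, r) /\
    (forall p, p \in P -> variant_of R (lp p, rp p)) /\
    (forall p, p \in P -> var_disjoint (l, r) (lp p, rp p)) /\
    (forall p q, p \in P -> q \in P -> p != q -> var_disjoint (lp p, rp p) (lp q, rp q)) /\
    P != [::] /\ uniq P /\
    (forall p, p \in P -> fun_pos l p) /\
    (forall p q, p \in P -> q \in P -> p != q -> parallel p q) /\
    mgu sg (fun e => exists p, p \in P /\ e.1 = lp p /\ subterm_at l p = Some e.2) /\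
    (P = [:: [::]] -> ~ variant (lp [::], rp [::]) (l, r)) /\
    s = subst sg l /\
    t = par_replace (subst sg l) P (fun p => subst sg (rp p)) /\
    u = subst sg r.

Definition CPS (R : rule -> Prop) : rule -> Prop :=
  fun rl => exists t u, crit_peak R t rl.1 u /\ (rl.2 = t \/ rl.2 = u).

Definition PCPS (R : rule -> Prop) : rule -> Prop :=
  fun rl => exists t u, par_crit_peak R t rl.1 u /\ (rl.2 = t \/ rl.2 = u).

End TRS.

(* Main.v *)
Require Import Defs.
From mathcomp Require Import all_boot.
From Stdlib Require Import Relations ClassicalEpsilon Lia.
From mathcomp Require Import zify.
Set Implicit Arguments.
Unset Strict Implicit.
Unset Printing Implicit Defensive.

Section Aux.
Variables (F V : Type).
Notation tm := (term F V).

Fixpoint term_ind' (P : tm -> Prop) (H1 : forall x, P (Var F x))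
  (H2 : forall f ts, (forall t, List.In t ts -> P t) -> P (Fun f ts)) (t : tm) : P t :=
  match t with
  | Var x => H1 x
  | Fun f ts => H2 f ts
     ((fix aux (l : seq tm) : forall u, List.In u l -> P u :=
        match l as l0 return forall u, List.In u l0 -> P u with
        | [::] => fun u H => False_ind _ H
        | v :: l' => fun u H => match H with
                     | or_introl E => eq_ind v P (term_ind' H1 H2 v) u E
                     | or_intror H' => aux l' u H' end
        end) ts)
  end.

Lemma map_ext_in (A B : Type) (f g : A -> B) (l : seq A) :
  (forall a, List.In a l -> f a = g a) -> map f l = map g l.
Proof. elim: l => //= a l IH H; rewrite H ?IH //; [move=> b Hb; apply: H; by right | by left]. Qed.

Lemma subst_ext (s1 s2 : V -> tm) t : (forall x, s1 x = s2 x) -> subst s1 t = subst s2 t.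
Proof.
move=> H; elim/term_ind': t => [x|f ts IH] //=; by rewrite (map_ext_in IH).
Qed.

Lemma subst_ext_occ (s1 s2 : V -> tm) t : (forall x, occurs x t -> s1 x = s2 x) -> subst s1 t = subst s2 t.
Proof.
elim/term_ind': t => [x|f ts IH] H /=; first by apply: H; constructor.
congr Fun; apply: map_ext_in => u Hu; apply: IH => // x Hx; apply: H; econstructor; eauto.
Qed.

Lemma subst_comp (s d : V -> tm) t : subst d (subst s t) = subst (fun x => subst d (s x)) t.
Proof.
elim/term_ind': t => [x|f ts IH] //=; rewrite -map_comp; congr Fun; exact: map_ext_in.
Qed.

Lemma subst_var t : subst (@Var F V) t = t.
Proof.
elim/term_ind': t => [x|f ts IH] //=; congr Fun; rewrite -[RHS]map_id; exact: map_ext_in.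
Qed.

Lemma occurs_subst y (s : V -> tm) t : occurs y (subst s t) -> exists z, occurs z t /\ occurs y (s z).
Proof.
elim/term_ind': t => [x|f ts IH] /= H; first by exists x; split => //; constructor.
inversion H; subst.
have [u [Hu Et]] : exists u, List.In u ts /\ t = subst s u by move/List.in_map_iff: H2 => [u [? ?]]; exists u.
rewrite Et in H3; case: (IH u Hu H3) => z [Hz1 Hz2]; exists z; split => //; econstructor; eauto.
Qed.

Fixpoint tsize (t : tm) : nat := match t with Var _ => 1 | Fun _ ts => (sumn (map tsize ts)).+1 end.

Lemma in_sumn (A : Type) (g : A -> nat) u us : List.In u us -> g u <= sumn (map g us).
Proof. elim: us => //= a l IH [->|H]; [exact: leq_addr | exact: leq_trans (IH H) (leq_addl _ _)]. Qed.

Lemma occurs_size x (s : V -> tm) t : occurs x t -> tsize (s x) <= tsize (subst s t).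
Proof.
elim => //= f ts u Hin _ IH; apply: leq_trans IH _; apply: leq_trans (leqnSn _).
by rewrite -map_comp; apply: (in_sumn (fun v => tsize (subst s v))).
Qed.

Lemma occurs_size_fun x (s : V -> tm) f ts : occurs x (Fun f ts) -> tsize (s x) < tsize (subst s (Fun f ts)).
Proof.
move=> H; inversion H; subst => /=. rewrite ltnS; apply: leq_trans (occurs_size s H3) _.
by rewrite -map_comp; apply: (in_sumn (fun v => tsize (subst s v))).
Qed.


Definition eqset (Es : seq (tm * tm)) : tm * tm -> Prop := fun e => List.In e Es.
Definition esize (Es : seq (tm * tm)) := sumn (map (fun e => tsize e.1 + tsize e.2) Es).
Definition covers (vs : seq V) (Es : seq (tm * tm)) :=
  forall x e, List.In e Es -> occurs x e.1 \/ occurs x e.2 -> List.In x vs.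
Definition unifiable (Es : seq (tm * tm)) := exists t, unifies t (eqset Es).

Lemma mgu_equiv E1 E2 (s : V -> tm) : (forall t, unifies t E1 <-> unifies t E2) -> mgu s E1 -> mgu s E2.
Proof. move=> H [H1 H2]; split; first by apply/H. by move=> t /H; apply: H2. Qed.

Lemma unif_cons t e Es : unifies t (eqset (e :: Es)) <-> subst t e.1 = subst t e.2 /\ unifies t (eqset Es).
Proof.
split; first by move=> H; split; [apply: (H e); left | move=> e' He'; apply: (H e'); right].
by case=> H1 H2 e' [<-|He'] //; apply: (H2 e').
Qed.

Lemma unif_app t Es1 Es2 : unifies t (eqset (Es1 ++ Es2)) <-> unifies t (eqset Es1) /\ unifies t (eqset Es2).
Proof.
rewrite /unifies /eqset; split.
  by move=> H; split=> e He; apply: (H e); apply: List.in_or_app; [left|right].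
by case=> H1 H2 e He; case: (List.in_app_or _ _ _ He) => He'; [apply: (H1 e)|apply: (H2 e)].
Qed.

Lemma unif_zip t (ts us : seq tm) : size ts = size us ->
  (map (subst t) ts = map (subst t) us <-> unifies t (eqset (zip ts us))).
Proof.
elim: ts us => [|a ts IH] [|b us] //= Hs; first by split=> // _ e [].
case: Hs => Hs; rewrite unif_cons /= -IH //; split; first by case=> -> ->.
by case=> -> ->.
Qed.

Lemma in_zip (ts us : seq tm) a b : List.In (a, b) (zip ts us) -> List.In a ts /\ List.In b us.
Proof.
elim: ts us => [|a' ts IH] [|b' us] //= [[-> ->]|H]; first by split; left.
by case: (IH _ H) => ? ?; split; right.
Qed.

Lemma esize_zip (ts us : seq tm) : size ts = size us ->
  esize (zip ts us) = sumn (map tsize ts) + sumn (map tsize us).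
Proof.
elim: ts us => [|a ts IH] [|b us] //= Hs; case: Hs => Hs; rewrite /esize /= -/(esize _) IH //.
by rewrite !addnA; congr addn; rewrite -!addnA; congr addn; rewrite addnC.
Qed.

Definition remv (x : V) (vs : seq V) :=
  filter (fun y => if excluded_middle_informative (y = x) then false else true) vs.

Lemma remv_in x vs y : List.In y vs -> y <> x -> List.In y (remv x vs).
Proof.
elim: vs => //= a vs IH [->|H] Hyx.
  by case: excluded_middle_informative => //= _; left.
by case: excluded_middle_informative => //= _; [apply: IH | right; apply: IH].
Qed.

Lemma remv_size x vs : List.In x vs -> size (remv x vs) < size vs.
Proof.
elim: vs => //= a vs IH [->|H].
  case: excluded_middle_informative => //= _; rewrite ltnS size_filter; exact: count_size.
case: excluded_middle_informative => //= _.
  by apply: leq_trans (IH H) (leqnSn _).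
exact: IH.
Qed.


Lemma occurs_var (x y : V) : occurs x (Var F y) -> x = y.
Proof. by move=> H; inversion H. Qed.

Lemma var_elim n
  (IHn : forall vs Es, size vs < n -> covers vs Es -> unifiable Es -> exists s, mgu s (eqset Es))
  vs x b rest :
  size vs < n.+1 -> covers vs ((Var F x, b) :: rest) -> unifiable ((Var F x, b) :: rest) ->
  b <> Var F x -> exists s, mgu s (eqset ((Var F x, b) :: rest)).
Proof.
move=> Hvs Hcov [tau Htau] Hb.
have Htx : tau x = subst tau b by apply: (Htau (Var F x, b)); left.
have Hnocc : ~ occurs x b.
  case: b Hb Htx {Hcov Htau} => [y|g us] Hb Htx Ho.
    by apply: Hb; rewrite (occurs_var Ho).
  by have := occurs_size_fun tau Ho; rewrite -Htx ltnn.
pose rho := fun y => if excluded_middle_informative (y = x) then b else Var F y.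
have rho_id : forall t : V -> tm, t x = subst t b -> forall u, subst t (subst rho u) = subst t u.
  move=> t Ht u; rewrite subst_comp; apply: subst_ext => y; rewrite /rho.
  by case: excluded_middle_informative => [E|_] //=; rewrite E Ht.
have Hrhob : subst rho b = b.
  rewrite -[RHS]subst_var; apply: subst_ext_occ => y Hy; rewrite /rho.
  by case: excluded_middle_informative => // Eyx; rewrite Eyx in Hy.
pose Es' := map (fun e => (subst rho e.1, subst rho e.2)) rest.
have Hxvs : List.In x vs by apply: (Hcov x (Var F x, b)); [left | left; constructor].
have unif' : forall t : V -> tm, unifies t (eqset ((Var F x, b) :: rest)) -> unifies t (eqset Es').
  move=> t Ht; have Htx' : t x = subst t b by apply: (Ht (Var F x, b)); left.
  move=> e /List.in_map_iff [e0 [<- He0]] /=; rewrite !rho_id //; apply: (Ht e0); by right.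
have [th [Hth1 Hth2]] : exists th, mgu th (eqset Es').
  apply: (IHn (remv x vs)); first by apply: leq_trans (remv_size Hxvs) _.
  - have key : forall u, (forall z, occurs z u -> List.In z vs) -> forall y, occurs y (subst rho u) -> List.In y (remv x vs).
      move=> u Hu y /occurs_subst [z [Hz1 Hz2]]; move: Hz2; rewrite /rho.
      case: excluded_middle_informative => Ezx Hy.
        apply: remv_in; first by apply: (Hcov y (Var F x, b)); [left | right].
        by move=> Eyx; apply: Hnocc; rewrite -Eyx.
      rewrite (occurs_var Hy); apply: remv_in => //; exact: Hu.
    move=> y e /List.in_map_iff [e0 [<- He0]] /= [Hy|Hy]; apply: (key _ _ y Hy) => z Hz;
      apply: (Hcov z e0); [by right | by left | by right | by right].
  - by exists tau; apply: unif'.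
exists (fun y => subst th (rho y)); split.
  move=> e [<-|He] /=.
    rewrite -subst_comp Hrhob /rho; case: excluded_middle_informative => //.
  rewrite -!subst_comp; apply: (Hth1 (subst rho e.1, subst rho e.2)).
  by apply/List.in_map_iff; exists e.
move=> t Ht; have [d Hd] := Hth2 t (unif' t Ht).
have Htx' : t x = subst t b by apply: (Ht (Var F x, b)); left.
exists d => y; rewrite subst_comp.
have -> : t y = subst t (rho y) by rewrite /rho; case: excluded_middle_informative => [E|_] //=; rewrite E Htx'.
by apply: subst_ext => z; rewrite Hd.
Qed.


Lemma tsize_pos (t : tm) : 0 < tsize t. Proof. by case: t. Qed.

Lemma unify_main n : forall vs Es, size vs < n -> covers vs Es -> unifiable Es ->
  exists s, mgu s (eqset Es).
Proof.
elim: n => [//|n IHn] vs Es Hvs.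
move: {2}(esize Es) (leqnn (esize Es)) => m; elim: m Es => [|m IHm] Es.
  case: Es => [|[a b] rest] Hm Hcov Hun.
    by exists (@Var F V); split; [move=> e [] | move=> t _; exists t].
  have := tsize_pos a; move: Hm; rewrite /esize /= leqn0 !addn_eq0.
  by case/andP => /andP[/eqP -> _].
case: Es => [|[a b] rest] Hm Hcov Hun.
  by exists (@Var F V); split; [move=> e [] | move=> t _; exists t].
case: a Hm Hcov Hun => [x|f ts] Hm Hcov Hun.
  case: (excluded_middle_informative (b = Var F x)) => Hb; last exact: var_elim IHn _ _ _ _ Hvs Hcov Hun Hb.
  subst b.
  have Heq : forall t, unifies t (eqset ((Var F x, Var F x) :: rest)) <-> unifies t (eqset rest).
    by move=> t; rewrite unif_cons; split; [case | split].
  have [s Hs] : exists s, mgu s (eqset rest).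
    apply: IHm.
    - by move: Hm; rewrite /esize /= -/(esize rest); lia.
    - by move=> y e He; apply: (Hcov y e); right.
    - by case: Hun => t /Heq Ht; exists t.
  by exists s; apply: (mgu_equiv _ Hs) => t; rewrite Heq.
case: b Hm Hcov Hun => [x|g us] Hm Hcov Hun.
  have Heq : forall t, unifies t (eqset ((Fun f ts, Var F x) :: rest)) <-> unifies t (eqset ((Var F x, Fun f ts) :: rest)).
    by move=> t; rewrite !unif_cons; split; case=> H1 H2; split => //; rewrite H1.
  have [s Hs] : exists s, mgu s (eqset ((Var F x, Fun f ts) :: rest)).
    apply: (var_elim IHn Hvs) => //.
    - move=> y e [<-|He] Hy.
        apply: (Hcov y (Fun f ts, Var F x)); first by left.
        by case: Hy => Hy; [right|left].
      by apply: (Hcov y e) => //; right.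
    - by case: Hun => t /Heq Ht; exists t.
  by exists s; apply: (mgu_equiv _ Hs) => t; rewrite Heq.
have [t0 Ht0] := Hun.
have := Ht0 (Fun f ts, Fun g us) (or_introl erefl); rewrite /= => -[Efg Emap].
subst g; have Hsz : size ts = size us by rewrite -(size_map (subst t0) ts) Emap size_map.
have Heq : forall t, unifies t (eqset ((Fun f ts, Fun f us) :: rest)) <-> unifies t (eqset (zip ts us ++ rest)).
  move=> t; rewrite unif_cons unif_app -unif_zip //=; split.
    by case=> E1 H2; split => //; case: E1.
  by case=> E1 H2; split => //=; rewrite E1.
have [s Hs] : exists s, mgu s (eqset (zip ts us ++ rest)).
  apply: IHm.
  - move: Hm; rewrite /esize map_cat sumn_cat -!/(esize _) esize_zip // /esize /= -/(esize rest).
    lia.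
  - move=> y [a b] He Hy; case: (List.in_app_or _ _ _ He) => He'.
      case: (in_zip He') => Ha Hb; apply: (Hcov y (Fun f ts, Fun f us)); first by left.
      by case: Hy => Hy; [left|right]; econstructor; eauto.
    by apply: (Hcov y (a, b)) => //; right.
  - by exists t0; apply/Heq.
by exists s; apply: (mgu_equiv _ Hs) => t; rewrite Heq.
Qed.


Lemma replace_nil (t u : tm) : replace_at t [::] u = u.
Proof. by case: t. Qed.

Lemma parallel_nil q : parallel [::] q = false.
Proof. by case: q. Qed.
Lemma parallel_nil_r q : parallel q [::] = false.
Proof. by rewrite /parallel; case: q. Qed.
Lemma parallel_cons i p j q : parallel (i :: p) (j :: q) = if i == j then parallel p q else true.
Proof.
rewrite /parallel /=; have [E|H] := eqVneq i j; first by subst j.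
by [].
Qed.

Lemma nth_error_upd (A : Type) (g : A -> A) xs i j : i <> j ->
  List.nth_error (upd_nth g xs i) j = List.nth_error xs j.
Proof. elim: xs i j => [|x xs IH] [|i] [|j] //= H; try (by case: H); apply: IH => E; apply: H; by rewrite E. Qed.

Lemma nth_error_upd_same (A : Type) (g : A -> A) xs i :
  List.nth_error (upd_nth g xs i) i = option_map g (List.nth_error xs i).
Proof. by elim: xs i => [|x xs IH] [|i] //=. Qed.

Lemma upd_comm (A : Type) (g h : A -> A) xs i j : i <> j ->
  upd_nth g (upd_nth h xs i) j = upd_nth h (upd_nth g xs j) i.
Proof. elim: xs i j => [|x xs IH] [|i] [|j] //= H; try (by case: H); congr cons; apply: IH => E; apply: H; by rewrite E. Qed.

Lemma upd_upd (A : Type) (g h : A -> A) xs i :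
  upd_nth g (upd_nth h xs i) i = upd_nth (fun a => g (h a)) xs i.
Proof. by elim: xs i => [|x xs IH] [|i] //=; rewrite IH. Qed.

Lemma upd_ext (A : Type) (g h : A -> A) xs i :
  (forall a, List.nth_error xs i = Some a -> g a = h a) -> upd_nth g xs i = upd_nth h xs i.
Proof. elim: xs i => [|x xs IH] [|i] //= H; [by rewrite H | by rewrite IH]. Qed.

Lemma map_upd (A B : Type) (hh : A -> B) (g : A -> A) (g' : B -> B) xs i :
  (forall a, List.nth_error xs i = Some a -> hh (g a) = g' (hh a)) ->
  map hh (upd_nth g xs i) = upd_nth g' (map hh xs) i.
Proof. elim: xs i => [|x xs IH] [|i] //= H; [by rewrite H | by rewrite IH]. Qed.

Lemma nth_error_map' (A B : Type) (hh : A -> B) xs i :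
  List.nth_error (map hh xs) i = option_map hh (List.nth_error xs i).
Proof. by elim: xs i => [|x xs IH] [|i] //=. Qed.

Lemma subterm_replace_par (t : tm) p q u : parallel p q ->
  subterm_at (replace_at t p u) q = subterm_at t q.
Proof.
elim: p t q => [|i p IH] t [|j q] //; rewrite ?parallel_nil_r // parallel_cons.
case: t => [x|f ts] //= Hpq.
case: eqVneq Hpq => [<-|Hij] Hpq.
  rewrite nth_error_upd_same; case: (List.nth_error ts i) => //= a; exact: IH.
by rewrite nth_error_upd // => E; rewrite E eqxx in Hij.
Qed.

Lemma replace_comm_par (t : tm) p q u v : parallel p q ->
  replace_at (replace_at t p u) q v = replace_at (replace_at t q v) p u.
Proof.
elim: p t q => [|i p IH] t [|j q] //; rewrite ?parallel_nil_r // parallel_cons.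
case: t => [x|f ts] //= Hpq; congr Fun.
case: eqVneq Hpq => [<-|Hij] Hpq.
  by rewrite !upd_upd; apply: upd_ext => a _; apply: IH.
by apply: upd_comm => E; rewrite E eqxx in Hij.
Qed.

Lemma subterm_app (t : tm) q p a : subterm_at t q = Some a -> subterm_at t (q ++ p) = subterm_at a p.
Proof.
elim: q t => [|i q IH] t /=; first by case=> ->.
case: t => [x|f ts] //; case: (List.nth_error ts i) => // b; exact: IH.
Qed.

Lemma subterm_replace_app (t : tm) q w p a : subterm_at t q = Some a ->
  subterm_at (replace_at t q w) (q ++ p) = subterm_at w p.
Proof.
elim: q t => [|i q IH] t H; first by case: t H.
case: t H => [x|f ts] /= H; first discriminate.
rewrite nth_error_upd_same; move: H.
case: (List.nth_error ts i) => //= b; exact: IH.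
Qed.

Lemma replace_replace_app (t : tm) q w p v a : subterm_at t q = Some a ->
  replace_at (replace_at t q w) (q ++ p) v = replace_at t q (replace_at w p v).
Proof.
elim: q t => [|i q IH] t H; first by case: t H.
case: t H => [x|f ts] /= H; first discriminate.
congr Fun; rewrite upd_upd; apply: upd_ext => b Hb.
by apply: IH; rewrite Hb in H.
Qed.

Lemma subterm_subst (s : V -> tm) (t : tm) p u : subterm_at t p = Some u ->
  subterm_at (subst s t) p = Some (subst s u).
Proof.
elim: p t => [|i p IH] t /=; first by case=> ->.
case: t => [x|f ts] //=; rewrite nth_error_map'.
case: (List.nth_error ts i) => //= b; exact: IH.
Qed.

Lemma replace_subst (s : V -> tm) (t : tm) p a u : subterm_at t p = Some a ->
  subst s (replace_at t p u) = replace_at (subst s t) p (subst s u).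
Proof.
elim: p t => [|i p IH] t H; first by rewrite !replace_nil.
case: t H => [x|f ts] /= H; first discriminate.
congr Fun; apply: map_upd => b Hb.
by apply: IH; rewrite Hb in H.
Qed.

Lemma rstep_subst (R : rule F V -> Prop) (s : V -> tm) a b :
  rstep R a b -> rstep R (subst s a) (subst s b).
Proof.
case=> l [r [sg [p [HR [Hsub ->]]]]].
exists l, r, (fun x => subst s (sg x)), p; split => //; split.
  by rewrite (subterm_subst s Hsub) subst_comp.
by rewrite (replace_subst s _ Hsub) subst_comp.
Qed.

Lemma rstar_subst (R : rule F V -> Prop) (s : V -> tm) a b :
  rstar R a b -> rstar R (subst s a) (subst s b).
Proof.
elim => [x y H|x|x y z _ H1 _ H2]; [apply: rt_step; exact: rstep_subst | exact: rt_refl | exact: rt_trans H1 H2].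
Qed.

Lemma rstep_ctx (R : rule F V -> Prop) (x : tm) q a0 a b : subterm_at x q = Some a0 ->
  rstep R a b -> rstep R (replace_at x q a) (replace_at x q b).
Proof.
move=> Hq [l [r [sg [p [HR [Hsub ->]]]]]].
exists l, r, sg, (q ++ p); split => //; split.
  by rewrite (subterm_replace_app _ _ Hq).
by rewrite (replace_replace_app _ _ _ Hq).
Qed.

Lemma rstar_ctx (R : rule F V -> Prop) (x : tm) q a0 a b : subterm_at x q = Some a0 ->
  rstar R a b -> rstar R (replace_at x q a) (replace_at x q b).
Proof.
move=> Hq; elim => [u v H|u|u v w _ H1 _ H2];
  [apply: rt_step; exact: rstep_ctx Hq H | exact: rt_refl | exact: rt_trans H1 H2].
Qed.


Fixpoint vars (t : tm) : seq V :=
  match t with Var x => [:: x] | Fun _ ts => flatten (map vars ts) end.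

Lemma In_cat (A : Type) (x : A) s1 s2 : List.In x s2 -> List.In x (s1 ++ s2).
Proof. by elim: s1 => //= a s1 IH H; right; apply: IH. Qed.
Lemma In_catl (A : Type) (x : A) s1 s2 : List.In x s1 -> List.In x (s1 ++ s2).
Proof. elim: s1 => //= a s1 IH [->|H]; [by left | by right; apply: IH]. Qed.

Lemma occurs_vars x (t : tm) : occurs x t -> List.In x (vars t).
Proof.
elim => [|f ts u Hin _ IH] /=; first by left.
elim: ts Hin => //= a ts IHts [->|H]; [exact: In_catl | apply: In_cat; exact: IHts].
Qed.

Lemma mgu_singleton (a b : tm) (sg : V -> tm) : subst sg a = subst sg b ->
  exists s, mgu s (eqset [:: (a, b)]).
Proof.
move=> H; apply: (@unify_main (size (vars a ++ vars b)).+1 (vars a ++ vars b)) => //.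
  move=> x e [<-|[]] /= [Hx|Hx]; [apply: In_catl | apply: In_cat]; exact: occurs_vars.
by exists sg => e [<-|[]].
Qed.

Lemma mgu_ext E1 E2 (s : V -> tm) : (forall e, E1 e <-> E2 e) -> mgu s E1 -> mgu s E2.
Proof.
move=> H; apply: mgu_equiv => t; split=> Ht e He; apply: Ht; by apply/H.
Qed.

Lemma vd_sym (rl1 rl2 : rule F V) : var_disjoint rl1 rl2 -> var_disjoint rl2 rl1.
Proof. by move=> H x [H1 H2]; apply: (H x). Qed.

Lemma cp_pcp (R : rule F V -> Prop) t s u : crit_peak R t s u -> par_crit_peak R t s u.
Proof.
case=> l1 [r1 [l2 [r2 [p [sg [Hv1 [Hv2 [Hd [Hfp [Hmgu [Hroot [Es [Et Eu]]]]]]]]]]]]].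
subst s t u.
exists l2, r2, (fun _ => l1), (fun _ => r1), [:: p], sg.
split => //; split; first by [].
split; first by move=> q _; apply: vd_sym.
split; first by move=> q q'; rewrite !inE => /eqP -> /eqP ->; rewrite eqxx.
split => //; split => //.
split; first by move=> q; rewrite inE => /eqP ->.
split; first by move=> q q'; rewrite !inE => /eqP -> /eqP ->; rewrite eqxx.
split.
  apply: (mgu_ext _ Hmgu) => e; split; first by case=> E1 E2; exists p; rewrite inE eqxx.
  by case=> q [Hq [E1 E2]]; move: Hq; rewrite inE => /eqP Eq; subst q.
split; first by case=> Ep; apply: Hroot.
by [].
Qed.

Lemma par_subterm (s : tm) (g : pos -> tm) P' q : (forall q', q' \in P' -> parallel q' q) ->
  subterm_at (par_replace s P' g) q = subterm_at s q.
Proof.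
elim: P' => //= q' P' IH H.
rewrite subterm_replace_par; last by apply: H; rewrite inE eqxx.
by apply: IH => q'' Hq''; apply: H; rewrite inE Hq'' orbT.
Qed.

Lemma par_steps (R : rule F V -> Prop) (s w : tm) p g (P' : seq pos) :
  (forall q, q \in P' -> parallel p q) ->
  (forall q q', q \in P' -> q' \in P' -> q != q' -> parallel q q') -> uniq P' ->
  (forall q, q \in P' -> exists l0 r0 (th0 : V -> tm), R (l0, r0) /\
      subterm_at s q = Some (subst th0 l0) /\ g q = subst th0 r0) ->
  rstar R (replace_at s p w) (replace_at (par_replace s P' g) p w).
Proof.
elim: P' => [|q P' IH] Hp Hpp Hu Hr /=; first exact: rt_refl.
move: Hu => /= /andP [HqP Hu].
apply: rt_trans (IH _ _ Hu _) _.
- by move=> q' Hq'; apply: Hp; rewrite inE Hq' orbT.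
- by move=> a b Ha Hb; apply: Hpp; rewrite inE ?Ha ?Hb orbT.
- by move=> q' Hq'; apply: Hr; rewrite inE Hq' orbT.
apply: rt_step.
have [l0 [r0 [th0 [HR [Hs Hg]]]]] := Hr q (mem_head _ _).
have Hpq : parallel p q by apply: Hp; rewrite mem_head.
exists l0, r0, th0, q; split => //; split.
  rewrite subterm_replace_par // par_subterm // => q' Hq'; apply: Hpp => //.
    by rewrite inE Hq' orbT.
  by rewrite mem_head.
  by apply/eqP => E; move: HqP; rewrite -E Hq'.
by rewrite -Hg (replace_comm_par _ _ _ Hpq).
Qed.


Lemma pcps_step (R : rule F V -> Prop) x y : rstep (PCPS R) x y ->
  exists z, rstep (CPS R) x z /\ rstar R z y.
Proof.
case=> src [tgt [th [q [[t [u [Hpcp Htgt]]] [Hsub ->]]]]] /=.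
move: Hpcp Htgt => /=.
case=> l [r [lp [rp [P [sg [Hvlr [HvP [HdP [HdPP [HPne [HPu [Hfp [Hpar [Hmgu [Hroot [Es [Et Eu]]]]]]]]]]]]]]]]].
case: P HvP HdP HdPP HPne HPu Hfp Hpar Hmgu Hroot Et => [//|p P'] HvP HdP HdPP _ HPu Hfp Hpar Hmgu Hroot Et Htgt.
have Hp : p \in p :: P' by rewrite mem_head.
have [f0 [ts0 Hlsub]] := Hfp p Hp.
set lsub := Fun f0 ts0 in Hlsub.
have Hsgp : subst sg (lp p) = subst sg lsub.
  by apply: (Hmgu.1 (lp p, lsub)); exists p.
have [sp Hsp] := mgu_singleton Hsgp.
have Hsp' : mgu sp (fun e => e.1 = lp p /\ subterm_at l p = Some e.2).
  apply: (mgu_ext _ Hsp) => -[a b] /=; split.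
    by case=> // -[<- <-]; split.
  by case=> -> E; left; rewrite Hlsub in E; case: E => ->.
have [d Hd] : exists d : V -> tm, forall v, sg v = subst d (sp v).
  apply: Hsp'.2 => -[a b] /= [-> E]; rewrite Hlsub in E; case: E => <-; exact: Hsgp.
have Hsgd : forall t0, subst sg t0 = subst d (subst sp t0).
  by move=> t0; rewrite subst_comp; apply: subst_ext.
pose rho := fun v => subst th (d v).
have Hrho : forall t0, subst rho (subst sp t0) = subst th (subst sg t0).
  by move=> t0; rewrite Hsgd [in RHS]subst_comp.
have Hcp : crit_peak R (replace_at (subst sp l) p (subst sp (rp p))) (subst sp l) (subst sp r).
  exists (lp p), (rp p), l, r, p, sp.
  split; first exact: HvP.
  split => //; split; first by apply: vd_sym; apply: HdP.
  split; first exact: Hfp.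
  split => //; split => //.
  move=> Ep; subst p; case E: P' => [|qq P''].
    by apply: Hroot; rewrite E.
  rewrite E in HPu Hpar.
  have Hq2 : qq \in [:: [::], qq & P''] by rewrite !inE eqxx orbT.
  have H := Hpar [::] qq (mem_head _ _) Hq2.
  move: HPu => /= /andP [Hn _]; exfalso; have Hne : [::] != qq.
    by apply/eqP => E'; move: Hn; rewrite E' inE eqxx.
  by move: (H Hne); rewrite parallel_nil.
case: Htgt => Etgt; subst tgt.
- exists (replace_at x q (subst rho (replace_at (subst sp l) p (subst sp (rp p))))); split.
    exists (subst sp l), (replace_at (subst sp l) p (subst sp (rp p))), rho, q; split.
      by exists (replace_at (subst sp l) p (subst sp (rp p))), (subst sp r); split => //; left.
    by split => //; rewrite Hrho -Es.
  apply: (rstar_ctx Hsub).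
  rewrite (replace_subst _ _ (subterm_subst sp Hlsub)) !Hrho.
  rewrite -(replace_subst _ _ (subterm_subst sg Hlsub)) Et.
  apply: rstar_subst => /=.
  apply: par_steps.
  - move=> q' Hq'; apply: Hpar; rewrite ?inE ?Hq' ?orbT ?eqxx //.
    by apply/eqP => E; move: HPu => /= /andP [Hn _]; move: Hn; rewrite E Hq'.
  - by move=> a b Ha Hb; apply: Hpar; rewrite inE ?Ha ?Hb orbT.
  - by move: HPu => /= /andP [].
  - move=> q' Hq'; have Hq2 : q' \in p :: P' by rewrite inE Hq' orbT.
    have [[l0 r0] [HR0 [pi [_ [E1 E2]]]]] := HvP q' Hq2.
    exists l0, r0, (fun v => sg (pi v)); split => //.
    have [f1 [ts1 Hl1]] := Hfp q' Hq2.
    move: E1 E2 => /= E1 E2.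
    split; last by rewrite E2 subst_comp.
    rewrite (subterm_subst sg Hl1).
    have <- : subst sg (lp q') = subst sg (Fun f1 ts1) by apply: (Hmgu.1 (lp q', Fun f1 ts1)); exists q'.
    by rewrite E1 subst_comp.
- rewrite Eu; exists (replace_at x q (subst th (subst sg r))); split; last exact: rt_refl.
  exists (subst sp l), (subst sp r), rho, q; split.
    by exists (replace_at (subst sp l) p (subst sp (rp p))), (subst sp r); split => //; right.
  by split; rewrite Hrho // -Es.
Qed.

End Aux.

Theorem mainTheorem9 (F V : Type) (R : rule F V -> Prop) (HR : is_trs R) :
  (forall s t : term F V, rel_mid R (CPS R) s t <-> rel_mid R (PCPS R) s t) /\
  (rel_terminating (CPS R) R <-> rel_terminating (PCPS R) R).
Proof.
have H1 : forall s t : term F V, rel_mid R (CPS R) s t <-> rel_mid R (PCPS R) s t.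
  move=> s t; split.
    case=> s' [t' [Ha [[l [r [sg [p [[tt [uu [Hcp Hor]]] [Hs Ht]]]]]] Hb]]].
    exists s', t'; split => //; split => //.
    exists l, r, sg, p; split => //; exists tt, uu; split => //; exact: cp_pcp.
  case=> s' [t' [Ha [Hb Hc]]].
  have [z [Hz1 Hz2]] := pcps_step Hb.
  exists s', z; split => //; split => //; exact: rt_trans Hz2 Hc.
split => //; rewrite /rel_terminating; split => Hn [a Ha]; apply: Hn; exists a => i; apply/H1; exact: Ha.
Qed.
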